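(* Let $G$ be a nonempty oriented Burling graph. Then $G$ has a full in-star cutset, or $G$ is an oriented chandelier, or $G$ contains a vertex of degree at most $1$.
   Context: Graphs are finite, without loops or multiple edges; oriented graphs have no pair of opposite arcs; words such as degree, neighbor, connected, when applied to an oriented graph, refer to its underlying graph. In a rooted tree $T$ with root $r$, each non-root vertex $v$ has a parent $p(v)$; children, leaves, ancestors and descendants are as usual (every vertex is an ancestor and a descendant of itself). A branch is a sequence $v_1 v_2\dots v_k$ ($k\ge 0$) of vertices such that $v_i$ is the parent of $v_{i+1}$ for all $i<k$; it starts at $v_1$. A Burling tree is a 4-tuple $(T,r,\ell,c)$ where $T$ is a rooted tree with root $r$; $\ell$ assigns to each non-leaf vertex $v$ one of its children $\ell(v)$, called the last-born of $v$; and $c$ assigns to every vertex $v$ that is neither the root nor a last-born the vertex-set of a (possibly empty) branch of $T$ starting at $\ell(p(v))$, while $c(v)=\emptyset$ if $v$ is the root or a last-born. The oriented graph fully derived from $(T,r,\ell,c)$ has vertex-set $V(T)$ and an arc $uv$ if and only if $v\in c(u)$. An oriented graph is derived from a Burling tree if it is an induced subgraph of the oriented graph fully derived from it; an oriented Burling graph is an oriented graph derived from some Burling tree. For a vertex $v$, $N^-(v)$ is its set of in-neighbors and $N^-[v]=N^-(v)\cup\{v\}$. A full in-star cutset of an oriented graph $G$ is a set $N^-[v]$, for some $v\in V(G)$, such that $G\setminus N^-[v]$ is disconnected. An in-tree is an oriented graph obtained from a rooted tree by orienting every edge towards the root; a leaf of an in-tree is a source with exactly one out-neighbor. An oriented chandelier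 is an oriented graph obtained from an in-tree $G'$ with at least two leaves by adding a new vertex $v$ and all arcs $uv$ where $u$ is a leaf of $G'$. *)

(* Defs.v *)
From mathcomp Require Import all_boot.
Set Implicit Arguments. Unset Strict Implicit. Unset Printing Implicit Defensive.

(* An oriented graph on a finite vertex type V is given by its arc relation
   a : rel V (a x y means there is an arc x -> y). *)
Section Defs.

Variable V : finType.

Definition oriented (a : rel V) : Prop :=
  forall x y, ~~ a x x /\ ~~ (a x y && a y x).

Definition uadj (a : rel V) (x y : V) : bool := a x y || a y x.

Definition udeg (a : rel V) (v : V) : nat := #|[set u | uadj a v u]|.

Definition in_nbhd_closed (a : rel V) (v : V) : {set V} :=
  v |: [set u | a u v].

Definition disconnected_on (a : rel V) (S : {set V}) : Prop :=
  exists x y, [/\ x \in S, y \in S &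
    ~~ connect [rel u w | [&& u \in S, w \in S & uadj a u w]] x y].

Definition has_full_in_star_cutset (a : rel V) : Prop :=
  exists v, disconnected_on a (~: in_nbhd_closed a v).

Definition is_rooted_tree (S : {set V}) (r : V) (par : V -> option V) : Prop :=
  [/\ r \in S, par r = None,
      (forall v, v \in S -> v != r -> exists2 u, u \in S & par v = Some u)
    & (forall v, v \in S -> exists n, iter n (obind par) (Some v) = Some r)].

(* leaf of the in-tree (S, a restricted to S): a source with exactly one
   out-neighbour *)
Definition intree_leaf (a : rel V) (S : {set V}) (u : V) : bool :=
  [&& u \in S, [forall w, (w \in S) ==> ~~ a w u] &
      #|[set w in S | a u w]| == 1].

(* G is an oriented chandelier: there is a vertex v such that G - v is an
   in-tree G' (a rooted tree on V \ {v} with every edge oriented from child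
   to parent, i.e. towards the root) with at least two leaves, and the arcs
   at v are exactly the arcs u -> v for u a leaf of G'. *)
Definition is_oriented_chandelier (a : rel V) : Prop :=
  exists v rt (par : V -> option V),
    let S := [set~ v] in
    [/\ is_rooted_tree S rt par,
        (forall x y, x \in S -> y \in S -> a x y = (par x == Some y)),
        2 <= #|[set u | intree_leaf a S u]|,
        (forall u, a v u = false)
      & (forall u, u \in S -> a u v = intree_leaf a S u)].

End Defs.

Section Burling.
Variable W : finType.

Definition child_rel (par : W -> option W) : rel W :=
  fun x y => par y == Some x.

Definition is_leaf (par : W -> option W) (v : W) : bool :=
  [forall w, par w != Some v].

Definition is_last_born (par : W -> option W) (ell : W -> W) (v : W) : bool :=
  [exists w, ~~ is_leaf par w && (ell w == v)].

Definition burling_tree (r : W) (par : W -> option W) (ell : W -> W)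
    (c : W -> {set W}) : Prop :=
  [/\ is_rooted_tree [set: W] r par,
      (forall v, ~~ is_leaf par v -> par (ell v) = Some v),
      (forall v, (v == r) || is_last_born par ell v -> c v = set0)
    &
      (forall v pv, par v = Some pv -> ~~ is_last_born par ell v ->
         c v = set0 \/
         exists s : seq W, path (child_rel par) (ell pv) s /\
                           c v = [set x in ell pv :: s])].
End Burling.

(* G = (V, a) is derived from a Burling tree: it is (isomorphic to) an induced
   subgraph of the oriented graph fully derived from it (arc u -> v iff
   v \in c u). *)
Definition oriented_burling_graph (V : finType) (a : rel V) : Prop :=
  exists (W : finType) (r : W) par ell c,
    burling_tree r par ell c /\
    exists f : V -> W, injective f /\ forall x y, a x y = (f y \in c (f x)).

(* Main.v *)
Require Import Defs.
From mathcomp Require Import all_boot zify.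
From Stdlib Require Import Classical.
Set Implicit Arguments. Unset Strict Implicit. Unset Printing Implicit Defensive.

Lemma iter_obind_None (T : Type) (g : T -> option T) n :
  iter n (obind g) None = None.
Proof. by elim: n => //= n ->. Qed.

Lemma iter_obind_end (T : eqType) (g : T -> option T) v n m e e' :
  iter n (obind g) (Some v) = Some e -> g e = None ->
  iter m (obind g) (Some v) = Some e' -> g e' = None -> e = e'.
Proof.
wlog le: n m e e' / n <= m.
  move=> H; case: (leqP n m) => [|/ltnW] h; first exact: H.
  by move=> *; symmetry; apply: (H m n).
move=> h1 g1 h2 g2; move: h2; rewrite -(subnK le) iterD h1.
case: (m - n) => [|k]; first by move=> [].
by rewrite iterSr /= g1 iter_obind_None.
Qed.

Lemma iter_obind_idx (T : eqType) (g : T -> option T) v n m e :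
  iter n (obind g) (Some v) = Some e -> g e = None ->
  iter m (obind g) (Some v) = Some e -> n = m.
Proof.
wlog le: n m / n <= m.
  move=> H; case: (leqP n m) => [|/ltnW] h; first exact: H.
  by move=> *; symmetry; apply: (H m n).
move=> h1 g1; rewrite -(subnK le) iterD h1.
case E: (m - n) => [|k]; first by lia.
by rewrite iterSr /= g1 iter_obind_None.
Qed.

Section Tree.
Variable W : finType.
Variables (r : W) (par : W -> option W) (ell : W -> W) (c : W -> {set W}).
Hypothesis Hb : burling_tree r par ell c.

Definition anc (x y : W) := exists k, iter k (obind par) (Some y) = Some x.

Lemma Hreach y : exists n, iter n (obind par) (Some y) == Some r.
Proof. case: Hb => -[_ _ _ H] _ _ _. by case: (H y (in_setT y)) => n hn; exists n; apply/eqP. Qed.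

Lemma par_r : par r = None.
Proof. by case: Hb => -[]. Qed.

Definition depth y := ex_minn (Hreach y).

Lemma depthP y : iter (depth y) (obind par) (Some y) = Some r.
Proof. rewrite /depth; by case: ex_minnP => n /eqP. Qed.

Lemma reach_uniq y n : iter n (obind par) (Some y) = Some r -> n = depth y.
Proof. move=> h; exact: iter_obind_idx h par_r (depthP y). Qed.

Lemma anc_depth x y k : iter k (obind par) (Some y) = Some x -> depth y = depth x + k.
Proof. move=> h; symmetry; apply: reach_uniq; by rewrite iterD h depthP. Qed.

Lemma anc_refl x : anc x x. Proof. by exists 0. Qed.

Lemma anc_trans x y z : anc x y -> anc y z -> anc x z.
Proof. move=> [k hk] [j hj]; exists (k + j); by rewrite iterD hj. Qed.

Lemma anc_par b p : par b = Some p -> anc p b.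
Proof. by move=> h; exists 1. Qed.

Lemma anc_antisym x y : anc x y -> anc y x -> x = y.
Proof.
move=> [k hk] [j hj]; have := anc_depth hk; have := anc_depth hj => e1 e2.
have k0 : k = 0 by lia. by move: hk; rewrite k0 => -[].
Qed.

Lemma anc_total x y z : anc x y -> anc z y -> anc x z \/ anc z x.
Proof.
move=> [k hk] [j hj]; case: (leqP k j) => l.
  right; exists (j - k); by rewrite -hk -iterD subnK.
left; exists (k - j); by rewrite -hj -iterD subnK // ltnW.
Qed.

Lemma anc_step y b p : anc y b -> par b = Some p -> y = b \/ anc y p.
Proof.
move=> [[|k] hk] hp; first by case: hk; left.
by right; exists k; rewrite iterSr /= hp in hk.
Qed.

Lemma anc_par_not x p : par x = Some p -> ~ anc x p.
Proof.
move=> h [j hj]; have e1 := anc_depth hj.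
have e2 : depth x = depth p + 1 by apply: anc_depth; rewrite /= h.
lia.
Qed.

Lemma branch_anc s0 s x : path (child_rel par) s0 s -> x \in s0 :: s -> anc s0 x.
Proof.
elim: s s0 => [|b s IH] s0 /=; first by rewrite inE => _ /eqP ->; exact: anc_refl.
case/andP => /eqP hb hp; rewrite inE => /orP [/eqP -> | hx]; first exact: anc_refl.
apply: anc_trans (anc_par hb) (IH _ hp hx).
Qed.

Lemma branch_chain s0 s x y : path (child_rel par) s0 s -> x \in s0 :: s -> y \in s0 :: s ->
  anc x y \/ anc y x.
Proof.
elim: s s0 => [|b s IH] s0 hp.
  by rewrite !inE => /eqP -> /eqP ->; left; exact: anc_refl.
rewrite in_cons => /orP [/eqP -> | hx] hy; first by left; exact: branch_anc hp hy.
move: hy; rewrite in_cons => /orP [/eqP -> | hy].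
  right. apply: (@branch_anc s0 (b :: s) x hp). by rewrite in_cons hx orbT.
move: hp => /= /andP [_ hp]; exact: IH hp hx hy.
Qed.

Lemma branch_mid s0 s x y : path (child_rel par) s0 s -> x \in s0 :: s ->
  anc s0 y -> anc y x -> y \in s0 :: s.
Proof.
elim: s s0 => [|b s IH] s0 hp.
  by rewrite inE => /eqP -> h1 h2; rewrite (anc_antisym h2 h1) mem_head.
rewrite in_cons => /orP [/eqP -> | hx] h1 h2; first by rewrite (anc_antisym h2 h1) mem_head.
move: hp => /= /andP [/eqP hb hp].
have hbx : anc b x by apply: branch_anc hp hx.
case: (anc_total h2 hbx) => h3.
  case: (anc_step h3 hb) => [->|h4]; first by rewrite !in_cons eqxx orbT.
  by rewrite (anc_antisym h4 h1) mem_head.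
by rewrite in_cons (IH b hp hx h3 h2) orbT.
Qed.

Lemma c_inv u x : x \in c u -> exists pu s,
  [/\ par u = Some pu, par (ell pu) = Some pu, ell pu != u,
      path (child_rel par) (ell pu) s & c u = [set z in ell pu :: s]].
Proof.
case: Hb => -[_ _ Hpar _] Hell Hc0 Hc hx.
have ur : u != r. by apply/negP => /eqP ur; rewrite Hc0 ?ur ?eqxx // in_set0 in hx.
have [pu _ hpu] := Hpar u (in_setT u) ur.
have nl : ~~ is_leaf par pu by apply/forallPn; exists u; rewrite negbK hpu.
have nlb : ~~ is_last_born par ell u.
  by apply/negP => h; rewrite Hc0 ?h ?orbT // in_set0 in hx.
have ne : ell pu != u.
  apply/negP => /eqP e; move/negP: nlb; apply; apply/existsP; exists pu; by rewrite nl e eqxx.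
case: (Hc u pu hpu nlb) => [h|[s [hs hcu]]]; first by rewrite h in_set0 in hx.
exists pu, s; split => //; exact: Hell.
Qed.

Lemma lastborn_c u pu : par u = Some pu -> c (ell pu) = set0.
Proof.
case: Hb => -[_ _ Hpar _] Hell Hc0 Hc hpu.
have nl : ~~ is_leaf par pu by apply/forallPn; exists u; rewrite negbK hpu.
apply: Hc0; apply/orP; right; apply/existsP; exists pu; by rewrite nl eqxx.
Qed.

End Tree.
Section Graph.
Variables (V W : finType) (a : rel V).
Variables (r : W) (par : W -> option W) (ell : W -> W) (c : W -> {set W}).
Hypothesis Hb : burling_tree r par ell c.
Variable f : V -> W.
Hypothesis Hinj : injective f.
Hypothesis Ha : forall x y, a x y = (f y \in c (f x)).

Notation A := (anc par).

Lemma arc_inv u x : a u x -> exists pu s,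
  [/\ par (f u) = Some pu, par (ell pu) = Some pu, ell pu != f u,
      path (child_rel par) (ell pu) s
    & f x \in ell pu :: s /\ c (f u) = [set z in ell pu :: s]].
Proof.
rewrite Ha => hx; have [pu [s [h1 h2 h3 h4 h5]]] := c_inv Hb hx.
exists pu, s; split => //; split => //; by rewrite h5 inE in hx.
Qed.

Lemma arc_incomp u x : a u x -> ~ A (f u) (f x) /\ ~ A (f x) (f u).
Proof.
move/arc_inv => [pu [s [h1 h2 h3 h4 [h5 _]]]].
have hx := branch_anc h4 h5.
have nu : ~ A (ell pu) (f u).
  move=> h; case: (anc_step h h1) => [e|h']; first by rewrite e eqxx in h3.
  exact: (anc_par_not Hb h2 h').
split.
  move=> h; case: (anc_total h hx) => h'; last exact: nu.
  case: (anc_step h' h2) => [e|h'']; first by rewrite e eqxx in h3.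
  exact: (anc_par_not Hb h1 h'').
move=> h; apply: nu; exact: anc_trans hx h.
Qed.

Lemma arc_down y u w : A (f y) (f u) -> u != y -> a u w -> A (f y) (f w).
Proof.
move=> hyu nuy /arc_inv [pu [s [h1 h2 h3 h4 [h5 _]]]].
case: (anc_step hyu h1) => [e|h].
  by move: nuy; rewrite (Hinj e) eqxx.
apply: anc_trans h _; apply: anc_trans (anc_par h2) (branch_anc h4 h5).
Qed.

Lemma arc_up y u w : A (f y) (f u) -> a w u -> ~~ a w y -> A (f y) (f w).
Proof.
move=> hyu hwu nwy; have [pw [s [h1 h2 h3 h4 [h5 h6]]]] := arc_inv hwu.
have hx := branch_anc h4 h5.
case: (anc_total hyu hx) => h.
  case: (anc_step h h2) => [e|h'].
    by move: nwy; rewrite Ha h6 inE e mem_head.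
  exact: anc_trans h' (anc_par h1).
have := branch_mid Hb h4 h5 h hyu.
by move: nwy; rewrite Ha h6 inE => /negP.
Qed.

Lemma arc_depth u x : a u x -> depth Hb (f u) <= depth Hb (f x) /\
  (depth Hb (f u) = depth Hb (f x) -> forall w, ~~ a x w).
Proof.
move=> hux; have [pu [s [h1 h2 h3 h4 [h5 _]]]] := arc_inv hux.
have [k hk] := branch_anc h4 h5.
have e1 := anc_depth Hb hk.
have e2 : depth Hb (ell pu) = depth Hb pu + 1 by apply: anc_depth; rewrite /= h2.
have e3 : depth Hb (f u) = depth Hb pu + 1 by apply: anc_depth; rewrite /= h1.
split; first by lia.
move=> e w; have k0 : k = 0 by lia.
move: hk; rewrite k0 => -[e4].
by rewrite Ha e4 (lastborn_c Hb h1) in_set0.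
Qed.

Lemma out_comp x o1 o2 : a x o1 -> a x o2 -> A (f o1) (f o2) \/ A (f o2) (f o1).
Proof.
move=> h1 h2; have [pu [s [_ _ _ h4 [h5 h6]]]] := arc_inv h1.
have : f o2 \in c (f x) by rewrite -Ha.
rewrite h6 inE => h7; exact: branch_chain h4 h5 h7.
Qed.

Lemma cutset_lemma y d o : d != y -> A (f y) (f d) -> ~ A (f y) (f o) -> ~~ a o y ->
  has_full_in_star_cutset a.
Proof.
move=> ndy hyd nyo noy; exists y, d, o.
set S := ~: in_nbhd_closed a y.
have inS z : (z \in S) = (z != y) && ~~ a z y.
  by rewrite /S /in_nbhd_closed !inE negb_or.
have hdS : d \in S.
  rewrite inS ndy /=; apply/negP => hdy.
  by case: (arc_incomp hdy) => _ /(_ hyd).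
have hoS : o \in S.
  rewrite inS noy andbT; apply/negP => /eqP e; apply: nyo; rewrite e; exact: anc_refl.
split => //; apply/negP => /connectP [p hp ho].
suff : A (f y) (f (last d p)) by rewrite -ho.
clear ho ndy hoS; elim: p d hyd hdS hp => [|x p IH] d' hyd' hdS' //=.
case/andP => /and3P [_ hxS hadj] hp.
suff hx : A (f y) (f x) by exact: (IH x hx hxS hp).
move: hdS' hxS; rewrite !inS => /andP [nd _] /andP [_ nxy].
case/orP: hadj => h; first exact: arc_down hyd' nd h.
exact: arc_up hyd' h nxy.
Qed.

End Graph.
Section Main.
Variables (V W : finType) (a : rel V).
Variables (r : W) (par : W -> option W) (ell : W -> W) (c : W -> {set W}).
Hypothesis Hb : burling_tree r par ell c.
Variable f : V -> W.
Hypothesis Hinj : injective f.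
Hypothesis Ha : forall x y, a x y = (f y \in c (f x)).
Hypothesis Hor : oriented a.
Hypothesis Hno : ~ has_full_in_star_cutset a.
Hypothesis Hdeg : forall v, 1 < udeg a v.

Notation A := (anc par).

Lemma Hnt y d o : d != y -> A (f y) (f d) -> ~ A (f y) (f o) -> a o y.
Proof.
move=> h1 h2 h3; apply: contraT => h4; case: Hno.
exact: (cutset_lemma Hb Hinj Ha h1 h2 h3 h4).
Qed.

Definition nontriv y := exists d, d != y /\ A (f y) (f d).

Lemma nt_uniq y1 y2 : nontriv y1 -> nontriv y2 -> y1 = y2.
Proof.
move=> [d1 [n1 h1]] [d2 [n2 h2]]; case: (eqVneq y1 y2) => // ne.
case: (classic (A (f y1) (f y2))) => h12.
  have h21 : ~ A (f y2) (f y1).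
    by move=> h; move: ne; rewrite (Hinj (anc_antisym Hb h12 h)) eqxx.
  have := Hnt n2 h2 h21 => a12.
  by case: (arc_incomp Hb Ha a12).
have a21 := Hnt n1 h1 h12.
case: (classic (A (f y2) (f y1))) => h21.
  by case: (arc_incomp Hb Ha a21).
have a12 := Hnt n2 h2 h21.
case: (Hor y1 y2) => _ /negP H; exfalso; apply: H; by rewrite a12 a21.
Qed.

Lemma none_case : 0 < #|V| -> (forall y, ~ nontriv y) -> False.
Proof.
move=> /card_gt0P [x0 _] Hnone.
have out1 x o1 o2 : a x o1 -> a x o2 -> o1 = o2.
  move=> h1 h2; case: (eqVneq o1 o2) => // ne.
  case: (out_comp Hb Ha h1 h2) => h.
    by case: (Hnone o1); exists o2; split => //; rewrite eq_sym.
  by case: (Hnone o2); exists o1.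
have [x _ Hmin] := @arg_minnP V x0 predT (fun x => depth Hb (f x)) isT.
have [u hu] : exists u, forall w, ~~ a w u.
  case: (classic (exists u, a u x)) => [[u hux]|Hn].
    exists u => w; apply/negP => hwu.
    have [e1 _] := arc_depth Hb Ha hux.
    have [e2 e3] := arc_depth Hb Ha hwu.
    have m1 := Hmin w isT.
    have m2 := Hmin u isT.
    have := e3 (ltac:(lia)) x; by rewrite hux.
  exists x => w; apply/negP => h; apply: Hn; by exists w.
have := Hdeg u; rewrite ltnNge => /negP; apply.
apply/card_le1_eqP => w1 w2; rewrite !inE /uadj (negbTE (hu w1)) (negbTE (hu w2)) !orbF.
by move=> h1 h2; apply: out1 h2 h1.
Qed.

Section Chand.
Variable y : V.
Hypothesis Hy : nontriv y.

Lemma P1 o : ~ A (f y) (f o) -> a o y.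
Proof. case: Hy => d [n h]; exact: Hnt n h. Qed.

Lemma sink w : a y w = false.
Proof.
apply/negP => h; have [h1 _] := arc_incomp Hb Ha h.
have h2 := P1 h1.
by case: (Hor y w) => _ /negP; apply; rewrite h h2.
Qed.

Lemma P3 o : A (f y) (f o) -> ~~ a o y.
Proof. move=> h; apply/negP => h'; by case: (arc_incomp Hb Ha h') => _ /(_ h). Qed.

Lemma P4 x o1 o2 : a x o1 -> a x o2 -> o1 != y -> o2 != y -> o1 = o2.
Proof.
move=> h1 h2 n1 n2; case: (eqVneq o1 o2) => // ne.
case: (out_comp Hb Ha h1 h2) => h.
  have nt : nontriv o1 by exists o2; split => //; rewrite eq_sym.
  by have e := nt_uniq nt Hy; rewrite e eqxx in n1.
have nt : nontriv o2 by exists o1; split.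
by have e := nt_uniq nt Hy; rewrite e eqxx in n2.
Qed.

Lemma P5 w u : a w u -> ~ A (f y) (f u) -> False.
Proof.
move=> hwu hu.
have uy : u != y by apply/negP => /eqP e; apply: hu; rewrite e; exact: anc_refl.
case: (classic (A (f y) (f w))) => hw.
  have wy : w != y by apply/negP => /eqP e; rewrite e sink in hwu.
  exact: hu (arc_down Hb Hinj Ha hw wy hwu).
have hwy := P1 hw.
case: (out_comp Hb Ha hwu hwy) => h; last exact: hu.
have nt : nontriv u by exists y; split => //; rewrite eq_sym.
by have e := nt_uniq nt Hy; rewrite e eqxx in uy.
Qed.

Definition par' x := [pick w | (w != y) && a x w].

Lemma par'_Some x w : par' x = Some w -> (w != y) && a x w.
Proof. rewrite /par'; case: pickP => [w' h [<-]|] //. Qed.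

Lemma par'_arc x w : w != y -> a x w -> par' x = Some w.
Proof.
move=> h1 h2; rewrite /par'; case: pickP => [w' /andP [h3 h4]|H].
  by rewrite (P4 h4 h2 h3 h1).
by have := H w; rewrite h1 h2.
Qed.

Definition End x e := exists n, iter n (obind par') (Some x) = Some e /\ par' e = None.

Lemma End_arc x w e : par' x = Some w -> End x e -> End w e.
Proof.
move=> hx [[|k] [hk he]]; first by case: hk => ex; rewrite -ex hx in he.
by exists k; rewrite iterSr /= hx in hk.
Qed.

Lemma End_arc' x w e : par' x = Some w -> End w e -> End x e.
Proof. by move=> hx [k [hk he]]; exists k.+1; rewrite iterSr /= hx. Qed.

Lemma End_exists x : exists e, End x e.
Proof.
set K := \max_(z : V) depth Hb (f z).
suff H : forall m x, K - depth Hb (f x) <= m -> exists e, End x e by exact: (H _ x (leqnn _)).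
elim=> [|m IH] x' hm; (case E: (par' x') => [w|]; last by exists x', 0).
- have /andP [_ hw] := par'_Some E.
  have [h1 h2] := arc_depth Hb Ha hw.
  have hK : depth Hb (f w) <= K by rewrite /K; exact: leq_bigmax.
  have e : depth Hb (f x') = depth Hb (f w) by lia.
  exists w; apply: End_arc' E _; exists 0; split => //.
  rewrite /par'; case: pickP => // w' /andP [_ h]; by rewrite (negbTE (h2 e w')) in h.
- have /andP [_ hw] := par'_Some E.
  have [h1 h2] := arc_depth Hb Ha hw.
  have hK : depth Hb (f w) <= K by rewrite /K; exact: leq_bigmax.
  case: (eqVneq (depth Hb (f x')) (depth Hb (f w))) => e.
    exists w; apply: End_arc' E _; exists 0; split => //.
    rewrite /par'; case: pickP => // w' /andP [_ h]; by rewrite (negbTE (h2 e w')) in h.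
  have [e' he'] := IH w (ltac:(lia)).
  exists e'; exact: End_arc' E he'.
Qed.

Lemma End_uniq x e e' : End x e -> End x e' -> e = e'.
Proof. move=> [n [h1 h2]] [m [h3 h4]]; exact: iter_obind_end h1 h2 h3 h4. Qed.

Lemma iter_notin n v e : iter n (obind par') (Some v) = Some e -> v != y -> e != y.
Proof.
elim: n e => [|n IH] e /=; first by move=> [<-].
case E: (iter n (obind par') (Some v)) => [z|] //= hz hv.
by have /andP [] := par'_Some hz.
Qed.

Lemma out_exists v : a v y -> exists2 w, w != y & a v w.
Proof.
move=> hvy; have [_ hv] := arc_incomp Hb Ha hvy.
case: (classic (exists2 w, w != y & a v w)) => // Hn.
have ey w : uadj a v w -> w = y.
  case/orP => h; last by case: (P5 h hv).
  case: (eqVneq w y) => // ne; case: Hn; by exists w.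
have := Hdeg v; rewrite ltnNge => /negP; case.
apply/card_le1_eqP => w1 w2; rewrite !inE => h1 h2.
by rewrite (ey _ h1) (ey _ h2).
Qed.

Lemma leaf_iff u : intree_leaf a [set~ y] u = a u y.
Proof.
case: (eqVneq u y) => [->|uy].
  by rewrite sink /intree_leaf !inE eqxx.
case: (boolP (a u y)) => hu.
  have [_ hv] := arc_incomp Hb Ha hu.
  have [w wy hw] := out_exists hu.
  rewrite /intree_leaf !inE uy /=; apply/andP; split.
    apply/forallP => z; apply/implyP => _; apply/negP => hz; exact: P5 hz hv.
  have -> : [set z in [set~ y] | a u z] = [set w].
    apply/setP => z; rewrite !inE; apply/andP/eqP => [[h1 h2]|->]; last by [].
    exact: P4 h2 hw h1 wy.
  by rewrite cards1.
apply/negP => /and3P [_ /forallP hin hc].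
have := Hdeg u; rewrite ltnNge => /negP; apply.
rewrite -(eqP hc); apply: subset_leq_card; apply/subsetP => z; rewrite !inE /uadj.
case/orP => h.
  rewrite h andbT; apply/negP => /eqP e; by rewrite -e h in hu.
case: (eqVneq z y) => [e|zy]; first by move: h; rewrite e sink.
by have := hin z; rewrite !inE zy /= h.
Qed.

Lemma chandelier : is_oriented_chandelier a.
Proof.
set D := ~: in_nbhd_closed a y.
have inD z : (z \in D) = (z != y) && ~~ a z y.
  by rewrite /D /in_nbhd_closed !inE negb_or.
have conn : forall x z, x \in D -> z \in D ->
    connect [rel u w | [&& u \in D, w \in D & uadj a u w]] x z.
  move=> x z hx hz; apply: contraT => h; case: Hno; exists y, x, z; by split.
have End_conn : forall p x e, x \in D ->
    path [rel u w | [&& u \in D, w \in D & uadj a u w]] x p -> End x e -> End (last x p) e.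
  elim=> [|z p IH] x e hx //= /andP [/and3P [_ hz hadj] hp] he.
  suff hze : End z e by exact: (IH z e hz hp hze).
  move: hz; rewrite inD => /andP [zy _].
  move: hx; rewrite inD => /andP [xy _].
  case/orP: hadj => h.
    exact: End_arc (par'_arc zy h) he.
  exact: End_arc' (par'_arc xy h) he.
have [d0 [nd0 hd0]] := Hy.
have d0D : d0 \in D by rewrite inD nd0 P3.
have [rt Hrt] := End_exists d0.
have EndD v : v \in D -> End v rt.
  move=> hv; have /connectP [p hp ->] := conn _ _ d0D hv.
  exact: End_conn d0D hp Hrt.
have AllEnd v : v != y -> End v rt.
  move=> vy; case: (boolP (a v y)) => hvy; last by apply: EndD; rewrite inD vy.
  have [w wy hw] := out_exists hvy.
  apply: End_arc' (par'_arc wy hw) _; apply: EndD; rewrite inD wy /=.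
  apply/negP => hwy; have [_ h] := arc_incomp Hb Ha hwy; exact: P5 hw h.
have rty : rt != y by case: Hrt => n [hn _]; exact: iter_notin hn nd0.
exists y, rt, par' => /=; split.
- split.
  + by rewrite !inE.
  + by case: Hrt => n [].
  + move=> v; rewrite !inE => vy vrt.
    have [[|k] [hk _]] := AllEnd v vy; first by case: hk => e; rewrite e eqxx in vrt.
    move: hk; rewrite iterSr /=; case E: (par' v) => [u|]; last by rewrite iter_obind_None.
    move=> _; exists u => //; rewrite !inE; by have /andP [] := par'_Some E.
  + move=> v; rewrite !inE => vy; have [n [hn _]] := AllEnd v vy; by exists n.
- move=> x z _; rewrite !inE => zy.
  case: (boolP (a x z)) => h; first by rewrite (par'_arc zy h) eqxx.
  apply/esym/negP => /eqP e; have /andP [_ h'] := par'_Some e; by rewrite h' in h.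
- have -> : #|[set u | intree_leaf a [set~ y] u]| = udeg a y.
    apply: eq_card => u; by rewrite !inE leaf_iff /uadj sink.
  exact: Hdeg.
- exact: sink.
- move=> u _; by rewrite leaf_iff.
Qed.

End Chand.
End Main.

Unset Implicit Arguments.

Theorem theorem5p5 (V : finType) (a : rel V) :
  0 < #|V| -> oriented a -> oriented_burling_graph a ->
  has_full_in_star_cutset a \/ is_oriented_chandelier a \/
  exists v : V, udeg a v <= 1.
Proof.
move=> Hn Hor [W [r [par [ell [c [Hb [f [Hinj Ha]]]]]]]].
case: (classic (has_full_in_star_cutset a)) => [h|Hno]; first by left.
case: (classic (exists v, udeg a v <= 1)) => [h|Hdeg']; first by right; right.
have Hdeg : forall v, 1 < udeg a v.
  by move=> v; rewrite ltnNge; apply/negP => h; apply: Hdeg'; exists v.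
right; left.
case: (classic (exists y, nontriv par f y)) => [[y hy]|Hnone].
  exact: (chandelier Hb Hinj Ha Hor Hno Hdeg hy).
exfalso; apply: (none_case Hb Ha Hdeg Hn) => y hy; apply: Hnone; by exists y.
Qed.
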